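(* There exists a constant $C_{\rm lip}>0$, depending only on the shape-regularity of the family $\{\mathcal{T}_h\}_{h>0}$ and on $p$ (in particular independent of $h$ and of $\gamma_0$), such that for all $v_h,w_h,z_h\in\mathcal{V}_h$, $$|d_h(v_h;v_h,z_h)-d_h(w_h;w_h,z_h)|\le C_{\rm lip}\,\gamma_0\,h\,|v_h-w_h|_{1,\Omega}\,|z_h|_{1,\Omega}.$$
   Context: Let $\Omega\subset\mathbb{R}^2$ be an open bounded polygonal domain with Lipschitz boundary and $\{\mathcal{T}_h\}_{h>0}$ a shape-regular family of conforming triangulations of $\Omega$ into triangles $K$, $h_K=\mathrm{diam}(K)$, $h=\max_K h_K$, nodes $x_1,\dots,x_N$. $\mathcal{V}_h=\{\chi\in H^1(\Omega):\chi|_K\in\mathbb{P}_1(K)\ \forall K\}$. $\mathcal{E}_h$ is the set of interior edges; for $E\in\mathcal{E}_h$, $h_E=|E|$, $\mathbf t$ a fixed unit tangent vector on $E$ and $\partial_{\mathbf t}$ the tangential derivative. For a node $x_i$, $S_i=\{j\neq i: x_j\text{ shares an interior edge with }x_i\}$. For $w_h\in\mathcal{V}_h$, $\xi_{w_h}\in\mathcal{V}_h$ has nodal values $\xi_{w_h}(x_i)=\big|\sum_{j\in S_i}(w_h(x_i)-w_h(x_j))\big|\big/\sum_{j\in S_i}|w_h(x_i)-w_h(x_j)|$ if the denominator is nonzero and $0$ otherwise. Fix $p\in[1,\infty)$ and $\gamma_0>0$; $\alpha_E(w_h):=\max_{x\in E}[\xi_{w_h}(x)]^p$, and $$d_h(w_h;u_h,v_h)=\sum_{E\in\mathcal{E}_h}\gamma_0\,h_E^2\,\alpha_E(w_h)\int_E\partial_{\mathbf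 t}u_h\,\partial_{\mathbf t}v_h\,ds.$$ $|\cdot|_{1,\Omega}$ is the $H^1(\Omega)$ seminorm. *)

(* Defs.v *)
From Stdlib Require Import Reals Lra List Classical ClassicalEpsilon.
Import ListNotations.
Open Scope R_scope.

Definition pt2 := (R * R)%type.

Definition cdec (P : Prop) : bool :=
  if excluded_middle_informative P then true else false.

Definition lsum {A : Type} (f : A -> R) (l : list A) : R :=
  fold_right (fun a s => f a + s) 0 l.

Definition nsum (N : nat) (f : nat -> R) : R := lsum f (seq 0 N).

Definition dist2 (x y : pt2) : R :=
  sqrt ((fst x - fst y) ^ 2 + (snd x - snd y) ^ 2).

Definition is_open (U : pt2 -> Prop) : Prop :=
  forall x, U x -> exists r, 0 < r /\ forall y, dist2 x y < r -> U y.

Definition closure (U : pt2 -> Prop) (x : pt2) : Prop :=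
  forall r, 0 < r -> exists y, U y /\ dist2 x y < r.

Definition bdry (U : pt2 -> Prop) (x : pt2) : Prop := closure U x /\ ~ U x.

Definition is_connected (U : pt2 -> Prop) : Prop :=
  forall A B : pt2 -> Prop, is_open A -> is_open B ->
    (forall x, U x -> A x \/ B x) ->
    (forall x, U x -> A x -> B x -> False) ->
    (exists x, U x /\ A x) -> (exists x, U x /\ B x) -> False.

(* Lipschitz boundary: near each boundary point, in a rotated frame,
   U is locally the subgraph of a Lipschitz function. *)
Definition lipschitz_boundary (U : pt2 -> Prop) : Prop :=
  forall x, bdry U x ->
    exists (th r a L : R) (g : R -> R),
      0 < r /\ 0 < a /\ 0 <= L /\ g 0 = 0 /\
      (forall s t, Rabs (g s - g t) <= L * Rabs (s - t)) /\
      forall y1 y2, Rabs y1 < r -> Rabs y2 < a ->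
        (U (fst x + y1 * cos th - y2 * sin th,
            snd x + y1 * sin th + y2 * cos th) <-> y2 < g y1).

(* ---------- mesh data ----------
   N nodes with coordinates pt 0 .. pt (N-1); triangles are triples of
   node indices (listed with increasing indices). *)
Definition tri := (nat * nat * nat)%type.
Definition tv1 (t : tri) : nat := fst (fst t).
Definition tv2 (t : tri) : nat := snd (fst t).
Definition tv3 (t : tri) : nat := snd t.
Definition tverts (t : tri) : list nat := [tv1 t; tv2 t; tv3 t].

Definition tdet (pt : nat -> pt2) (t : tri) : R :=
  let a := pt (tv1 t) in let b := pt (tv2 t) in let c := pt (tv3 t) in
  (fst b - fst a) * (snd c - snd a) - (fst c - fst a) * (snd b - snd a).

Definition tarea (pt : nat -> pt2) (t : tri) : R := Rabs (tdet pt t) / 2.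

Definition elen (pt : nat -> pt2) (a b : nat) : R := dist2 (pt a) (pt b).

Definition tdiam (pt : nat -> pt2) (t : tri) : R :=
  Rmax (elen pt (tv1 t) (tv2 t)) (Rmax (elen pt (tv2 t) (tv3 t)) (elen pt (tv1 t) (tv3 t))).

Definition tinradius (pt : nat -> pt2) (t : tri) : R :=
  2 * tarea pt t / (elen pt (tv1 t) (tv2 t) + elen pt (tv2 t) (tv3 t) + elen pt (tv1 t) (tv3 t)).

Definition hmax (pt : nat -> pt2) (tris : list tri) : R :=
  fold_right (fun t m => Rmax (tdiam pt t) m) 0 tris.

Definition in_tri (pt : nat -> pt2) (t : tri) (x : pt2) : Prop :=
  exists l1 l2 l3, 0 <= l1 /\ 0 <= l2 /\ 0 <= l3 /\ l1 + l2 + l3 = 1 /\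
    x = (l1 * fst (pt (tv1 t)) + l2 * fst (pt (tv2 t)) + l3 * fst (pt (tv3 t)),
         l1 * snd (pt (tv1 t)) + l2 * snd (pt (tv2 t)) + l3 * snd (pt (tv3 t))).

(* convex hull of the points of a finite list of nodes (empty if list empty) *)
Definition in_hull (pt : nat -> pt2) (l : list nat) (x : pt2) : Prop :=
  exists lam : nat -> R,
    (forall i, 0 <= lam i) /\
    lsum lam (seq 0 (length l)) = 1 /\
    x = (lsum (fun i => lam i * fst (pt (nth i l 0%nat))) (seq 0 (length l)),
         lsum (fun i => lam i * snd (pt (nth i l 0%nat))) (seq 0 (length l))).

Definition common_verts (t t' : tri) : list nat :=
  filter (fun i => existsb (Nat.eqb i) (tverts t')) (tverts t).

Definition conforming_triangulation (N : nat) (pt : nat -> pt2) (tris : list tri)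
  (Om : pt2 -> Prop) : Prop :=
  is_open Om /\ is_connected Om /\ (exists x, Om x) /\ lipschitz_boundary Om /\
  (forall t, In t tris ->
     (tv1 t < tv2 t)%nat /\ (tv2 t < tv3 t)%nat /\ (tv3 t < N)%nat /\ tdet pt t <> 0) /\
  NoDup tris /\
  (forall i j, (i < N)%nat -> (j < N)%nat -> pt i = pt j -> i = j) /\
  (forall i, (i < N)%nat -> exists t, In t tris /\ In i (tverts t)) /\
  (forall x, closure Om x <-> exists t, In t tris /\ in_tri pt t x) /\
  (* conformity: two distinct triangles meet in a common vertex, a common
     edge, or not at all *)
  (forall t t' x, In t tris -> In t' tris -> t <> t' ->
     in_tri pt t x -> in_tri pt t' x -> in_hull pt (common_verts t t') x).

Definition shape_regular (sigma : R) (pt : nat -> pt2) (tris : list tri) : Prop :=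
  forall t, In t tris -> tdiam pt t <= sigma * tinradius pt t.

Definition is_edge (tris : list tri) (a b : nat) : Prop :=
  a <> b /\ exists t, In t tris /\ In a (tverts t) /\ In b (tverts t).

(* interior edge E = [x_a, x_b] (a < b, each edge counted once):
   an edge of the mesh whose relative interior lies in Om (E not on the boundary) *)
Definition interior_edge (pt : nat -> pt2) (tris : list tri) (Om : pt2 -> Prop)
  (a b : nat) : Prop :=
  (a < b)%nat /\ is_edge tris a b /\
  forall s, 0 < s < 1 ->
    Om ((1 - s) * fst (pt a) + s * fst (pt b), (1 - s) * snd (pt a) + s * snd (pt b)).

Definition in_S (pt : nat -> pt2) (tris : list tri) (Om : pt2 -> Prop) (i j : nat) : Prop :=
  j <> i /\ (interior_edge pt tris Om i j \/ interior_edge pt tris Om j i).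

(* ---------- the discrete functions (elements of V_h via nodal values) ---------- *)

Definition xi (N : nat) (pt : nat -> pt2) (tris : list tri) (Om : pt2 -> Prop)
  (w : nat -> R) (i : nat) : R :=
  let S j := cdec (in_S pt tris Om i j) in
  let den := nsum N (fun j => if S j then Rabs (w i - w j) else 0) in
  let num := Rabs (nsum N (fun j => if S j then w i - w j else 0)) in
  if cdec (den = 0) then 0 else num / den.

(* x ^ p for x >= 0, p >= 1 (0 ^ p = 0) *)
Definition rpow (x p : R) : R := if Rlt_dec 0 x then Rpower x p else 0.

(* alpha_E(w) = max_{x in E} xi(x)^p ; xi is affine along E and t |-> t^p is
   increasing on [0,inf), so the max is attained at an endpoint of E *)
Definition alphaE (N : nat) (pt : nat -> pt2) (tris : list tri) (Om : pt2 -> Prop)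
  (p : R) (w : nat -> R) (a b : nat) : R :=
  Rmax (rpow (xi N pt tris Om w a) p) (rpow (xi N pt tris Om w b) p).

(* int_E d_t u d_t v ds for P1 u, v:  (d_t u constant = (u_b-u_a)/h_E) *)
Definition edge_int (pt : nat -> pt2) (u v : nat -> R) (a b : nat) : R :=
  (u b - u a) / elen pt a b * ((v b - v a) / elen pt a b) * elen pt a b.

Definition d_h (N : nat) (pt : nat -> pt2) (tris : list tri) (Om : pt2 -> Prop)
  (p gamma0 : R) (w u v : nat -> R) : R :=
  nsum N (fun a => nsum N (fun b =>
    if cdec (interior_edge pt tris Om a b) then
      gamma0 * (elen pt a b) ^ 2 * alphaE N pt tris Om p w a b * edge_int pt u v a b
    else 0)).

(* constant gradient of the P1 interpolant of nodal values v on triangle t *)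
Definition gradx (pt : nat -> pt2) (v : nat -> R) (t : tri) : R :=
  let a := pt (tv1 t) in let b := pt (tv2 t) in let c := pt (tv3 t) in
  ((v (tv2 t) - v (tv1 t)) * (snd c - snd a) - (v (tv3 t) - v (tv1 t)) * (snd b - snd a))
  / tdet pt t.
Definition grady (pt : nat -> pt2) (v : nat -> R) (t : tri) : R :=
  let a := pt (tv1 t) in let b := pt (tv2 t) in let c := pt (tv3 t) in
  ((fst b - fst a) * (v (tv3 t) - v (tv1 t)) - (fst c - fst a) * (v (tv2 t) - v (tv1 t)))
  / tdet pt t.

Definition h1semi (pt : nat -> pt2) (tris : list tri) (v : nat -> R) : R :=
  sqrt (lsum (fun t => tarea pt t * (gradx pt v t ^ 2 + grady pt v t ^ 2)) tris).

(* Main.v *)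
Require Import Defs.
From Stdlib Require Import Reals List.
From Stdlib Require Import Lra Psatz Classical ClassicalEpsilon ZArith Lia Bool.
Open Scope R_scope.


Lemma Rpower_le1 (c q : R) : 0 < c -> c <= 1 -> 0 <= q -> Rpower c q <= 1.
Proof.
  intros Hc Hc1 Hq. unfold Rpower. rewrite <- exp_0.
  destruct (Req_dec c 1) as [->|Hne].
  - rewrite ln_1. rewrite Rmult_0_r. lra.
  - assert (ln c < 0).
    { rewrite <- ln_1. apply ln_increasing; lra. }
    destruct (Req_dec q 0) as [->|]. 
    + rewrite Rmult_0_l. lra.
    + apply Rlt_le, exp_increasing. assert (0 < q) by lra. nra.
Qed.

Lemma rpow_bounds (x p : R) : 0 <= x <= 1 -> 1 <= p -> 0 <= rpow x p <= 1.
Proof.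
  intros Hx Hp. unfold rpow. destruct (Rlt_dec 0 x).
  - split. unfold Rpower. left; apply exp_pos. apply Rpower_le1; lra.
  - lra.
Qed.

Lemma rpow_lip_pos (x y p : R) : 0 < y -> y < x -> x <= 1 -> 1 <= p ->
  Rpower x p - Rpower y p <= p * (x - y).
Proof.
  intros Hy Hyx Hx Hp.
  destruct (MVT_cor2 (fun t => Rpower t p) (fun t => p * Rpower t (p - 1)) y x Hyx)
    as [c [Hc Hcr]].
  { intros c Hc. apply derivable_pt_lim_power. lra. }
  rewrite Hc. assert (Rpower c (p-1) <= 1) by (apply Rpower_le1; lra).
  assert (p * Rpower c (p-1) <= p) by nra.
  apply Rmult_le_compat_r; lra.
Qed.

Lemma Rpower_le_self (x p : R) : 0 < x -> x <= 1 -> 1 <= p -> Rpower x p <= x.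
Proof.
  intros. replace (Rpower x p) with (Rpower x (p - 1) * x).
  - assert (Rpower x (p-1) <= 1) by (apply Rpower_le1; lra). nra.
  - rewrite <- (Rpower_1 x) at 2 by lra. rewrite <- Rpower_plus. f_equal. ring.
Qed.

Lemma rpow_lip (x y p : R) : 0 <= x <= 1 -> 0 <= y <= 1 -> 1 <= p ->
  Rabs (rpow x p - rpow y p) <= p * Rabs (x - y).
Proof.
  intros Hx Hy Hp.
  assert (H : forall x y, 0 <= y <= x -> x <= 1 -> 0 <= rpow x p - rpow y p <= p * (x - y)).
  { clear x y Hx Hy. intros x y Hyx Hx. unfold rpow.
    destruct (Rlt_dec 0 x); destruct (Rlt_dec 0 y).
    - destruct (Req_dec x y) as [->|Hne]. lra.
      split.
      + unfold Rpower. 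
        assert (exp (p * ln y) <= exp (p * ln x)); [|lra].
        apply Rlt_le, exp_increasing.
        apply Rmult_lt_compat_l. lra. apply ln_increasing; lra.
      + apply rpow_lip_pos; lra.
    - assert (Rpower x p <= x) by (apply Rpower_le_self; lra).
      assert (0 < Rpower x p) by (unfold Rpower; apply exp_pos).
      assert (y = 0) by lra. subst y. nra.
    - exfalso. apply n. lra.
    - split. lra. nra. }
  destruct (Rle_dec y x).
  - specialize (H x y ltac:(lra) ltac:(lra)). rewrite Rabs_right by lra.
    rewrite Rabs_right by lra. lra.
  - specialize (H y x ltac:(lra) ltac:(lra)). rewrite Rabs_left1 by lra.
    rewrite Rabs_left1 by lra. lra.
Qed.

Section LS.
Context {A : Type}.

Lemma lsum_nil (f : A -> R) : lsum f nil = 0.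
Proof. reflexivity. Qed.
Lemma lsum_cons (f : A -> R) a l : lsum f (a :: l) = f a + lsum f l.
Proof. reflexivity. Qed.

Lemma lsum_ext (f g : A -> R) l : (forall x, In x l -> f x = g x) -> lsum f l = lsum g l.
Proof. induction l; simpl; intros H; auto. rewrite H, IHl; auto. Qed.

Lemma lsum_le (f g : A -> R) l : (forall x, In x l -> f x <= g x) -> lsum f l <= lsum g l.
Proof. induction l; simpl; intros H. lra. specialize (IHl (fun x h => H x (or_intror h))).
  specialize (H a (or_introl eq_refl)). lra. Qed.

Lemma lsum_nonneg (f : A -> R) l : (forall x, In x l -> 0 <= f x) -> 0 <= lsum f l.
Proof. induction l; simpl; intros H. lra.
  specialize (IHl (fun x h => H x (or_intror h))). specialize (H a (or_introl eq_refl)). lra. Qed.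

Lemma lsum_zero l : lsum (fun _ : A => 0) l = 0.
Proof. induction l; simpl; auto. rewrite IHl; ring. Qed.

Lemma lsum_plus (f g : A -> R) l : lsum (fun x => f x + g x) l = lsum f l + lsum g l.
Proof. induction l; simpl. ring. rewrite IHl. ring. Qed.

Lemma lsum_minus (f g : A -> R) l : lsum (fun x => f x - g x) l = lsum f l - lsum g l.
Proof. induction l; simpl. ring. rewrite IHl. ring. Qed.

Lemma lsum_scal (c : R) (f : A -> R) l : lsum (fun x => c * f x) l = c * lsum f l.
Proof. induction l; simpl. ring. rewrite IHl. ring. Qed.

Lemma lsum_abs (f : A -> R) l : Rabs (lsum f l) <= lsum (fun x => Rabs (f x)) l.
Proof. induction l; simpl. rewrite Rabs_R0; lra.
  eapply Rle_trans. apply Rabs_triang. lra. Qed.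

Lemma lsum_single (f : A -> R) l x : In x l -> (forall y, In y l -> 0 <= f y) -> f x <= lsum f l.
Proof. induction l; simpl; intros Hx H. contradiction.
  destruct Hx as [->|Hx].
  - assert (0 <= lsum f l) by (apply lsum_nonneg; auto). lra.
  - assert (0 <= f a) by auto. specialize (IHl Hx (fun y h => H y (or_intror h))). lra. Qed.

Lemma lsum_CS (f g : A -> R) l :
  (lsum (fun x => f x * g x) l)^2 <= lsum (fun x => f x ^ 2) l * lsum (fun x => g x ^ 2) l.
Proof.
  induction l. simpl; lra. rewrite !lsum_cons.
  set (S1 := lsum (fun x => f x * g x) l) in *.
  set (S2 := lsum (fun x => f x ^ 2) l) in *.
  set (S3 := lsum (fun x => g x ^ 2) l) in *.
  assert (0 <= S2) by (apply lsum_nonneg; intros; nra).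
  assert (0 <= S3) by (apply lsum_nonneg; intros; nra).
  assert (2 * f a * g a * S1 <= f a ^ 2 * S3 + g a ^ 2 * S2).
  { (* 2|fg S1| <= 2 |f||g| sqrt(S2 S3) <= f^2 S3 + g^2 S2 *)
    assert (Hs : S1 ^ 2 <= S2 * S3) by exact IHl.
    destruct (Rle_lt_dec S2 0) as [H2|H2].
    - assert (S2 = 0) by lra. assert (S1 ^ 2 <= 0) by nra. assert (HS1 : S1 = 0) by nra.
      rewrite HS1. nra.
    -
      assert (0 <= (g a * S2 - f a * S1) ^ 2 + f a ^ 2 * (S2 * S3 - S1 ^ 2)).
      { apply Rplus_le_le_0_compat. apply pow2_ge_0. apply Rmult_le_pos. apply pow2_ge_0. lra. }
      assert (E : S2 * (f a ^ 2 * S3 + g a ^ 2 * S2 - 2 * f a * g a * S1) =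
        (g a * S2 - f a * S1) ^ 2 + f a ^ 2 * (S2 * S3 - S1 ^ 2)) by ring.
      assert (0 <= f a ^ 2 * S3 + g a ^ 2 * S2 - 2 * f a * g a * S1); [|lra].
      apply (Rmult_le_reg_l S2). lra. rewrite E. lra. }
  assert (Hs : S1 ^ 2 <= S2 * S3) by exact IHl.
  replace ((f a * g a + S1) ^ 2) with (f a ^ 2 * g a ^ 2 + 2 * f a * g a * S1 + S1 ^ 2) by ring.
  replace ((f a ^ 2 + S2) * (g a ^ 2 + S3)) with (f a ^ 2 * g a ^ 2 + (f a ^ 2 * S3 + g a ^ 2 * S2) + S2 * S3) by ring.
  lra.
Qed.

Lemma lsum_sqrt_CS (f g : A -> R) l :
  lsum (fun x => f x * g x) l <= sqrt (lsum (fun x => f x ^ 2) l) * sqrt (lsum (fun x => g x ^ 2) l).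
Proof.
  rewrite <- sqrt_mult by (apply lsum_nonneg; intros; nra).
  destruct (Rle_lt_dec (lsum (fun x => f x * g x) l) 0). 
  - assert (0 <= sqrt (lsum (fun x => f x ^ 2) l * lsum (fun x => g x ^ 2) l)) by apply sqrt_pos. lra.
  - rewrite <- (sqrt_pow2 (lsum (fun x => f x * g x) l)) by lra.
    apply sqrt_le_1_alt. apply lsum_CS.
Qed.

End LS.

Lemma lsum_swap {A B : Type} (f : A -> B -> R) (la : list A) (lb : list B) :
  lsum (fun a => lsum (fun b => f a b) lb) la = lsum (fun b => lsum (fun a => f a b) la) lb.
Proof.
  induction la; simpl. rewrite lsum_zero. reflexivity.
  rewrite IHla. rewrite <- lsum_plus. reflexivity.
Qed.

Lemma Rdiv_le_0_compat x y : 0 <= x -> 0 < y -> 0 <= x / y.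
Proof. apply Rle_mult_inv_pos. Qed.

Definition Dsum (l : list nat) (s : nat -> bool) (d : nat -> R) :=
  lsum (fun j => if s j then Rabs (d j) else 0) l.
Definition Nsum (l : list nat) (s : nat -> bool) (d : nat -> R) :=
  Rabs (lsum (fun j => if s j then d j else 0) l).
Definition Xf (l : list nat) (s : nat -> bool) (d : nat -> R) :=
  if cdec (Dsum l s d = 0) then 0 else Nsum l s d / Dsum l s d.

Lemma Dsum_nonneg l s d : 0 <= Dsum l s d.
Proof. unfold Dsum. apply lsum_nonneg. intros. destruct (s x). apply Rabs_pos. lra. Qed.

Lemma Nsum_le l s d : Nsum l s d <= Dsum l s d.
Proof. unfold Nsum, Dsum. eapply Rle_trans. apply lsum_abs. apply lsum_le.
  intros. destruct (s x). lra. rewrite Rabs_R0. lra. Qed.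

Lemma Xf_bounds l s d : 0 <= Xf l s d <= 1.
Proof. unfold Xf. destruct (cdec _) eqn:E. lra.
  unfold cdec in E. destruct (excluded_middle_informative _); [discriminate|].
  pose proof (Dsum_nonneg l s d). pose proof (Nsum_le l s d).
  assert (0 <= Nsum l s d) by (unfold Nsum; apply Rabs_pos).
  assert (0 < Dsum l s d) by lra. split.
  apply Rdiv_le_0_compat; lra.
  apply Rmult_le_reg_r with (Dsum l s d). lra. unfold Rdiv. rewrite Rmult_assoc, Rinv_l by lra. lra.
Qed.

Definition Esum (l : list nat) (s : nat -> bool) (d d' : nat -> R) :=
  lsum (fun j => if s j then Rabs (d j - d' j) else 0) l.

Lemma Dsum_lip l s d d' : Rabs (Dsum l s d - Dsum l s d') <= Esum l s d d'.
Proof. unfold Dsum, Esum. rewrite <- lsum_minus. eapply Rle_trans. apply lsum_abs.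
  apply lsum_le. intros. destruct (s x). 
  - pose proof (Rabs_triang_inv (d x) (d' x)). pose proof (Rabs_triang_inv (d' x) (d x)).
    rewrite (Rabs_minus_sym (d' x)) in H1. unfold Rabs at 1. destruct (Rcase_abs _); lra.
  - rewrite Rminus_0_r, Rabs_R0. lra. Qed.

Lemma Nsum_lip l s d d' : Rabs (Nsum l s d - Nsum l s d') <= Esum l s d d'.
Proof. unfold Nsum, Esum.
  eapply Rle_trans. apply Rabs_triang_inv2.
  rewrite <- lsum_minus. eapply Rle_trans. apply lsum_abs.
  apply lsum_le. intros. destruct (s x). lra. rewrite Rminus_0_r, Rabs_R0. lra. Qed.

Lemma Xf_lip l s d d' : 0 < Dsum l s d ->
  Rabs (Xf l s d - Xf l s d') * Dsum l s d <= 2 * Esum l s d d'.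
Proof.
  intros HD. pose proof (Dsum_lip l s d d') as H1. pose proof (Nsum_lip l s d d') as H2.
  pose proof (Nsum_le l s d'). pose proof (Dsum_nonneg l s d').
  assert (0 <= Nsum l s d') by (unfold Nsum; apply Rabs_pos).
  assert (0 <= Nsum l s d) by (unfold Nsum; apply Rabs_pos).
  unfold Xf. destruct (cdec (Dsum l s d = 0)) eqn:E1.
  { unfold cdec in E1. destruct (excluded_middle_informative _); [lra|discriminate]. }
  destruct (cdec (Dsum l s d' = 0)) eqn:E2.
  - unfold cdec in E2. destruct (excluded_middle_informative _) as [e|]; [|discriminate].
    rewrite Rminus_0_r. rewrite Rabs_right.
    + unfold Rdiv. rewrite Rmult_assoc, Rinv_l by lra. rewrite e in *.
      assert (Nsum l s d' = 0) by lra. rewrite H5 in H2. rewrite Rminus_0_r in H2.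
      rewrite Rabs_right in H2 by lra. lra.
    + apply Rle_ge, Rdiv_le_0_compat; lra.
  - unfold cdec in E2. destruct (excluded_middle_informative _) as [|n]; [discriminate|].
    assert (0 < Dsum l s d') by lra.
    set (D := Dsum l s d) in *. set (D' := Dsum l s d') in *.
    set (Nn := Nsum l s d) in *. set (Nn' := Nsum l s d') in *.
    replace ((Nn / D - Nn' / D') * D) with ((Nn - Nn') + (Nn' / D') * (D' - D)) 
      by (field; lra).
    rewrite <- (Rabs_right D) at 2 by lra. rewrite <- Rabs_mult.
    replace ((Nn / D - Nn' / D') * D) with ((Nn - Nn') + (Nn' / D') * (D' - D)) 
      by (field; lra).
    eapply Rle_trans. apply Rabs_triang. rewrite Rabs_mult.
    assert (Rabs (Nn' / D') <= 1).
    { rewrite Rabs_right. apply Rmult_le_reg_r with D'. lra. unfold Rdiv.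
      rewrite Rmult_assoc, Rinv_l by lra. lra. apply Rle_ge, Rdiv_le_0_compat; lra. }
    rewrite Rabs_minus_sym in H1.
    assert (Rabs (Nn'/D') * Rabs (D' - D) <= Rabs (D' - D)).
    { pose proof (Rabs_pos (D' - D)). pose proof (Rabs_pos (Nn'/D')). nra. }
    lra.
Qed.

Section G.
Variables (N : nat) (pt : nat -> pt2) (tris : list tri) (Om : pt2 -> Prop) (p : R).
Let sel a := fun j => cdec (in_S pt tris Om a j).

Lemma xi_Xf u a : xi N pt tris Om u a = Xf (seq 0 N) (sel a) (fun j => u a - u j).
Proof. reflexivity. Qed.

Definition EE (v w : nat -> R) a :=
  Esum (seq 0 N) (fun j => cdec (in_S pt tris Om a j)) (fun j => v a - v j) (fun j => w a - w j).

Lemma single_le_D u a b : In b (seq 0 N) -> cdec (in_S pt tris Om a b) = true ->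
  Rabs (u a - u b) <= Dsum (seq 0 N) (sel a) (fun j => u a - u j).
Proof.
  intros Hb Hs. unfold Dsum.
  pose (f := fun j => if sel a j then Rabs (u a - u j) else 0).
  change (Rabs (u a - u b) <= lsum f (seq 0 N)).
  replace (Rabs (u a - u b)) with (f b) by (unfold f, sel; rewrite Hs; reflexivity).
  apply lsum_single. auto. intros. unfold f. destruct (sel a y). apply Rabs_pos. lra.
Qed.

Lemma A_lip (v w : nat -> R) a b : 1 <= p ->
  In b (seq 0 N) -> cdec (in_S pt tris Om a b) = true ->
  Rabs (rpow (xi N pt tris Om v a) p - rpow (xi N pt tris Om w a) p) * Rabs (v b - v a)
  <= 2 * p * EE v w a.
Proof.
  intros Hp Hb Hs. rewrite !xi_Xf.
  pose proof (single_le_D v a b Hb Hs) as HD.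
  rewrite Rabs_minus_sym in HD.
  set (D := Dsum (seq 0 N) (sel a) (fun j => v a - v j)) in *.
  pose proof (Dsum_nonneg (seq 0 N) (sel a) (fun j => v a - v j)) as HD0. fold D in HD0.
  pose proof (rpow_lip (Xf (seq 0 N) (sel a) (fun j => v a - v j)) (Xf (seq 0 N) (sel a) (fun j => w a - w j)) p
     (Xf_bounds _ _ _) (Xf_bounds _ _ _) Hp) as HL.
  assert (HE0 : 0 <= EE v w a).
  { unfold EE. unfold Esum. apply lsum_nonneg. intros. destruct (cdec (in_S pt tris Om a x)). apply Rabs_pos. lra. }
  destruct (Req_dec D 0) as [HZ|HZ].
  - assert (Rabs (v b - v a) = 0) by (pose proof (Rabs_pos (v b - v a)); lra).
    rewrite H. rewrite Rmult_0_r. apply Rmult_le_pos; lra.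
  - assert (HDp : 0 < D) by lra.
    pose proof (Xf_lip (seq 0 N) (sel a) (fun j => v a - v j) (fun j => w a - w j) HDp) as HX.
    fold D in HX. 
    change (Esum (seq 0 N) (sel a) (fun j => v a - v j) (fun j => w a - w j)) with (EE v w a) in HX.
    set (X := Rabs (Xf (seq 0 N) (sel a) (fun j => v a - v j) - Xf (seq 0 N) (sel a) (fun j => w a - w j))) in *.
    set (Y := Rabs (rpow (Xf (seq 0 N) (sel a) (fun j => v a - v j)) p - rpow (Xf (seq 0 N) (sel a) (fun j => w a - w j)) p)) in *.
    assert (0 <= Y) by apply Rabs_pos. assert (0 <= X) by apply Rabs_pos.
    assert (0 <= Rabs (v b - v a)) by apply Rabs_pos.
    apply Rle_trans with (p * X * D). 
    + assert (Y * Rabs (v b - v a) <= Y * D) by (apply Rmult_le_compat_l; lra).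
      assert (Y * D <= p * X * D) by (apply Rmult_le_compat_r; lra). lra.
    + nra.
Qed.

Lemma Rmax_lip x y x' y' : Rabs (Rmax x y - Rmax x' y') <= Rabs (x - x') + Rabs (y - y').
Proof. unfold Rmax. destruct (Rle_dec x y), (Rle_dec x' y');
  unfold Rabs; repeat destruct (Rcase_abs _); lra. Qed.

Lemma G_lip (v w : nat -> R) a b : 1 <= p ->
  In a (seq 0 N) -> In b (seq 0 N) ->
  cdec (in_S pt tris Om a b) = true -> cdec (in_S pt tris Om b a) = true ->
  Rabs (alphaE N pt tris Om p v a b * (v b - v a) - alphaE N pt tris Om p w a b * (w b - w a))
  <= 2 * p * EE v w a + 2 * p * EE v w b + Rabs ((v b - v a) - (w b - w a)).
Proof.
  intros Hp Ha Hb Hab Hba.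
  pose proof (A_lip v w a b Hp Hb Hab) as H1.
  pose proof (A_lip v w b a Hp Ha Hba) as H2. rewrite (Rabs_minus_sym (v a) (v b)) in H2.
  unfold alphaE.
  set (Av := Rmax (rpow (xi N pt tris Om v a) p) (rpow (xi N pt tris Om v b) p)).
  set (Aw := Rmax (rpow (xi N pt tris Om w a) p) (rpow (xi N pt tris Om w b) p)).
  replace (Av * (v b - v a) - Aw * (w b - w a)) with ((Av - Aw) * (v b - v a) + Aw * ((v b - v a) - (w b - w a))) by ring.
  eapply Rle_trans. apply Rabs_triang. rewrite !Rabs_mult.
  assert (Rabs Aw <= 1).
  { unfold Aw. rewrite !xi_Xf.
    pose proof (rpow_bounds _ p (Xf_bounds (seq 0 N) (sel a) (fun j => w a - w j)) Hp).
    pose proof (rpow_bounds _ p (Xf_bounds (seq 0 N) (sel b) (fun j => w b - w j)) Hp).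
    unfold Rmax; destruct (Rle_dec _ _); rewrite Rabs_right; lra. }
  assert (Rabs Aw * Rabs (v b - v a - (w b - w a)) <= Rabs (v b - v a - (w b - w a))).
  { pose proof (Rabs_pos Aw). pose proof (Rabs_pos (v b - v a - (w b - w a))). nra. }
  assert (Rabs (Av - Aw) * Rabs (v b - v a) <= 2 * p * EE v w a + 2 * p * EE v w b).
  { pose proof (Rmax_lip (rpow (xi N pt tris Om v a) p) (rpow (xi N pt tris Om v b) p)
       (rpow (xi N pt tris Om w a) p) (rpow (xi N pt tris Om w b) p)).
    fold Av Aw in H3. pose proof (Rabs_pos (v b - v a)).
    apply Rle_trans with ((Rabs (rpow (xi N pt tris Om v a) p - rpow (xi N pt tris Om w a) p) +
        Rabs (rpow (xi N pt tris Om v b) p - rpow (xi N pt tris Om w b) p)) * Rabs (v b - v a)).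
    apply Rmult_le_compat_r; lra. rewrite Rmult_plus_distr_r; lra. }
  lra.
Qed.
End G.

Lemma dist2_sym x y : dist2 x y = dist2 y x.
Proof. unfold dist2. f_equal. ring. Qed.

Lemma dist2_nonneg x y : 0 <= dist2 x y.
Proof. apply sqrt_pos. Qed.

Lemma dist2_sq x y : dist2 x y ^ 2 = (fst x - fst y) ^ 2 + (snd x - snd y) ^ 2.
Proof. unfold dist2. rewrite pow2_sqrt; auto.
  apply Rplus_le_le_0_compat; apply pow2_ge_0. Qed.

Lemma sq_pos x : x <> 0 -> 0 < x ^ 2.
Proof. intros H. pose proof (Rsqr_pos_lt x H). unfold Rsqr in H0. nra. Qed.

Lemma dist2_pos x y : x <> y -> 0 < dist2 x y.
Proof.
  intros H. unfold dist2. apply sqrt_lt_R0.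
  destruct x as [x1 x2], y as [y1 y2]; simpl.
  destruct (Req_dec x1 y1); destruct (Req_dec x2 y2).
  - subst. congruence.
  - assert (0 < (x2 - y2)^2) by (apply sq_pos; lra). nra.
  - assert (0 < (x1 - y1)^2) by (apply sq_pos; lra). nra.
  - assert (0 < (x1 - y1)^2) by (apply sq_pos; lra). nra.
Qed.

Lemma hmax_ge pt tris K : In K tris -> tdiam pt K <= hmax pt tris.
Proof. induction tris; simpl. tauto. intros [->|H].
  - apply Rmax_l. - eapply Rle_trans. apply IHtris; auto. apply Rmax_r. Qed.

Lemma hmax_nonneg pt tris : 0 <= hmax pt tris.
Proof. induction tris; simpl. lra. eapply Rle_trans. apply IHtris. apply Rmax_r. Qed.

Lemma elen_le_diam pt K a b : In a (tverts K) -> In b (tverts K) -> elen pt a b <= tdiam pt K.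
Proof.
  unfold tverts, tdiam, elen. 
  pose proof (dist2_nonneg (pt (tv1 K)) (pt (tv2 K))).
  pose proof (dist2_nonneg (pt (tv2 K)) (pt (tv3 K))).
  pose proof (dist2_nonneg (pt (tv1 K)) (pt (tv3 K))).
  pose proof (Rmax_l (dist2 (pt (tv2 K)) (pt (tv3 K))) (dist2 (pt (tv1 K)) (pt (tv3 K)))).
  pose proof (Rmax_r (dist2 (pt (tv2 K)) (pt (tv3 K))) (dist2 (pt (tv1 K)) (pt (tv3 K)))).
  pose proof (Rmax_l (dist2 (pt (tv1 K)) (pt (tv2 K))) (Rmax (dist2 (pt (tv2 K)) (pt (tv3 K))) (dist2 (pt (tv1 K)) (pt (tv3 K))))).
  pose proof (Rmax_r (dist2 (pt (tv1 K)) (pt (tv2 K))) (Rmax (dist2 (pt (tv2 K)) (pt (tv3 K))) (dist2 (pt (tv1 K)) (pt (tv3 K))))).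
  simpl. intros [<-|[<-|[<-|[]]]] [<-|[<-|[<-|[]]]];
  try (unfold dist2 at 1; replace (_ + _) with 0 by ring; rewrite sqrt_0; lra);
  try rewrite (dist2_sym (pt (tv2 K)) (pt (tv1 K)));
  try rewrite (dist2_sym (pt (tv3 K)) (pt (tv1 K)));
  try rewrite (dist2_sym (pt (tv3 K)) (pt (tv2 K))); lra.
Qed.

Lemma grad_id pt K (e : nat -> R) c : tdet pt K <> 0 -> In c (tverts K) ->
  e c - e (tv1 K) = gradx pt e K * (fst (pt c) - fst (pt (tv1 K))) + grady pt e K * (snd (pt c) - snd (pt (tv1 K))).
Proof.
  intros Hd Hc. unfold gradx, grady. unfold tdet in *.
  simpl in Hc. destruct Hc as [<-|[<-|[<-|[]]]]; field; auto.
Qed.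

Lemma grad_diff pt K (e : nat -> R) a b : tdet pt K <> 0 -> In a (tverts K) -> In b (tverts K) ->
  (e b - e a) ^ 2 <= (gradx pt e K ^ 2 + grady pt e K ^ 2) * elen pt a b ^ 2.
Proof.
  intros Hd Ha Hb. pose proof (grad_id pt K e a Hd Ha). pose proof (grad_id pt K e b Hd Hb).
  replace (e b - e a) with (gradx pt e K * (fst (pt b) - fst (pt a)) + grady pt e K * (snd (pt b) - snd (pt a))) by lra.
  unfold elen. rewrite dist2_sq.
  set (g1 := gradx pt e K). set (g2 := grady pt e K).
  set (d1 := fst (pt b) - fst (pt a)). set (d2 := snd (pt b) - snd (pt a)).
  replace (fst (pt a) - fst (pt b)) with (- d1) by (unfold d1; ring).
  replace (snd (pt a) - snd (pt b)) with (- d2) by (unfold d2; ring).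
  assert (0 <= (g1 * d2 - g2 * d1) ^ 2) by apply pow2_ge_0.
  replace ((g1 ^ 2 + g2 ^ 2) * ((- d1) ^ 2 + (- d2) ^ 2)) with ((g1 * d1 + g2 * d2) ^ 2 + (g1 * d2 - g2 * d1) ^ 2) by ring.
  lra.
Qed.

Lemma diam_sq_bound sigma pt K : tdet pt K <> 0 -> tdiam pt K <= sigma * tinradius pt K ->
  tdiam pt K ^ 2 <= 2 * sigma * tarea pt K /\ 0 < sigma.
Proof.
  intros Hd Hs.
  assert (Hne : pt (tv1 K) <> pt (tv2 K)).
  { intros E. apply Hd. unfold tdet. rewrite E. ring. }
  pose proof (dist2_pos _ _ Hne) as H12.
  pose proof (dist2_nonneg (pt (tv2 K)) (pt (tv3 K))).
  pose proof (dist2_nonneg (pt (tv1 K)) (pt (tv3 K))).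
  assert (HA : 0 < tarea pt K).
  { unfold tarea. pose proof (Rabs_pos_lt _ Hd). lra. }
  unfold tinradius, elen in Hs.
  set (P := dist2 (pt (tv1 K)) (pt (tv2 K)) + dist2 (pt (tv2 K)) (pt (tv3 K)) + dist2 (pt (tv1 K)) (pt (tv3 K))) in *.
  assert (HP : 0 < P) by (unfold P; lra).
  assert (Hdp : 0 < tdiam pt K).
  { eapply Rlt_le_trans. apply H12. apply (elen_le_diam pt K); simpl; auto. }
  assert (HdP : tdiam pt K <= P).
  { unfold tdiam, elen. unfold P. unfold Rmax. repeat destruct (Rle_dec _ _); lra. }
  assert (H2 : tdiam pt K * P <= sigma * (2 * tarea pt K)).
  { replace (sigma * (2 * tarea pt K)) with (sigma * (2 * tarea pt K / P) * P) by (field; lra).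
    apply Rmult_le_compat_r; lra. }
  split.
  - assert (tdiam pt K * tdiam pt K <= tdiam pt K * P) by (apply Rmult_le_compat_l; lra). nra.
  - assert (0 < tdiam pt K * P) by (apply Rmult_lt_0_compat; lra). nra.
Qed.

Definition TK pt (e : nat -> R) K := tarea pt K * (gradx pt e K ^ 2 + grady pt e K ^ 2).

Lemma TK_nonneg pt e K : 0 <= TK pt e K.
Proof. unfold TK, tarea. apply Rmult_le_pos. pose proof (Rabs_pos (tdet pt K)). lra.
  apply Rplus_le_le_0_compat; apply pow2_ge_0. Qed.

Lemma edge_diff_bound sigma pt K (e : nat -> R) a b : tdet pt K <> 0 ->
  tdiam pt K <= sigma * tinradius pt K -> In a (tverts K) -> In b (tverts K) ->
  (e b - e a) ^ 2 <= 2 * sigma * TK pt e K.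
Proof.
  intros Hd Hs Ha Hb. destruct (diam_sq_bound sigma pt K Hd Hs) as [H1 H2].
  pose proof (grad_diff pt K e a b Hd Ha Hb).
  pose proof (elen_le_diam pt K a b Ha Hb).
  pose proof (dist2_nonneg (pt a) (pt b)). fold (elen pt a b) in H3.
  assert (elen pt a b ^ 2 <= tdiam pt K ^ 2) by (apply pow_incr; lra).
  assert (0 <= gradx pt e K ^ 2 + grady pt e K ^ 2) by (apply Rplus_le_le_0_compat; apply pow2_ge_0).
  unfold TK.
  apply Rle_trans with ((gradx pt e K ^ 2 + grady pt e K ^ 2) * tdiam pt K ^ 2).
  - eapply Rle_trans. apply H. apply Rmult_le_compat_l; lra.
  - rewrite Rmult_comm. replace (2 * sigma * (tarea pt K * (gradx pt e K ^ 2 + grady pt e K ^ 2)))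
      with ((2 * sigma * tarea pt K) * (gradx pt e K ^ 2 + grady pt e K ^ 2)) by ring.
    apply Rmult_le_compat_r; lra.
Qed.

Definition oth1 (K : tri) a := if Nat.eqb a (tv1 K) then tv2 K else tv1 K.
Definition oth2 (K : tri) a := if Nat.eqb a (tv3 K) then tv2 K else tv3 K.

Definition sorted3 (K : tri) := (tv1 K < tv2 K)%nat /\ (tv2 K < tv3 K)%nat.

Definition det2 (p q : pt2) := fst p * snd q - snd p * fst q.
Definition vsub (x y : pt2) : pt2 := (fst x - fst y, snd x - snd y).

Lemma oth_cases K a : sorted3 K -> In a (tverts K) ->
  (a = tv1 K /\ oth1 K a = tv2 K /\ oth2 K a = tv3 K) \/
  (a = tv2 K /\ oth1 K a = tv1 K /\ oth2 K a = tv3 K) \/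
  (a = tv3 K /\ oth1 K a = tv1 K /\ oth2 K a = tv2 K).
Proof.
  unfold sorted3, oth1, oth2, tverts. simpl. intros [H1 H2] [<-|[<-|[<-|[]]]].
  - left. rewrite Nat.eqb_refl. destruct (Nat.eqb_spec (tv1 K) (tv3 K)); [lia|]. auto.
  - right; left. destruct (Nat.eqb_spec (tv2 K) (tv1 K)); [lia|].
    destruct (Nat.eqb_spec (tv2 K) (tv3 K)); [lia|]. auto.
  - right; right. destruct (Nat.eqb_spec (tv3 K) (tv1 K)); [lia|]. rewrite Nat.eqb_refl. auto.
Qed.

Lemma oth_det pt K a : sorted3 K -> In a (tverts K) -> tdet pt K <> 0 ->
  det2 (vsub (pt (oth1 K a)) (pt a)) (vsub (pt (oth2 K a)) (pt a)) <> 0.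
Proof.
  intros Hs Ha Hd. unfold tdet in Hd. unfold det2, vsub; simpl.
  destruct (oth_cases K a Hs Ha) as [[-> [-> ->]]|[[-> [-> ->]]|[-> [-> ->]]]];
  intro E; apply Hd; lra.
Qed.

Lemma oth_in K a : sorted3 K -> In a (tverts K) ->
  In (oth1 K a) (tverts K) /\ In (oth2 K a) (tverts K) /\
  forall v, In v (tverts K) -> v = a \/ v = oth1 K a \/ v = oth2 K a.
Proof.
  intros Hs Ha. unfold tverts; simpl.
  destruct (oth_cases K a Hs Ha) as [[-> [-> ->]]|[[-> [-> ->]]|[-> [-> ->]]]];
  (split; [tauto|split; [tauto|]]); intros v [<-|[<-|[<-|[]]]]; tauto.
Qed.

Lemma in_tri_at pt K a al be : sorted3 K -> In a (tverts K) -> 0 <= al -> 0 <= be -> al + be <= 1 ->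
  in_tri pt K (fst (pt a) + al * (fst (pt (oth1 K a)) - fst (pt a)) + be * (fst (pt (oth2 K a)) - fst (pt a)),
               snd (pt a) + al * (snd (pt (oth1 K a)) - snd (pt a)) + be * (snd (pt (oth2 K a)) - snd (pt a))).
Proof.
  intros Hs Ha H1 H2 H3. unfold in_tri.
  destruct (oth_cases K a Hs Ha) as [[-> [-> ->]]|[[-> [-> ->]]|[-> [-> ->]]]].
  - exists (1 - al - be), al, be. repeat split; try lra; f_equal; ring.
  - exists al, (1 - al - be), be. repeat split; try lra; f_equal; ring.
  - exists al, be, (1 - al - be). repeat split; try lra; f_equal; ring.
Qed.

Lemma sorted_incl_eq (K K' : tri) : sorted3 K -> sorted3 K' ->
  (forall v, In v (tverts K) -> In v (tverts K')) -> K = K'.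
Proof.
  destruct K as [[x1 x2] x3], K' as [[y1 y2] y3]. unfold sorted3, tverts, tv1, tv2, tv3; simpl.
  intros [H1 H2] [H3 H4] H.
  pose proof (H x1 (or_introl eq_refl)). pose proof (H x2 (or_intror (or_introl eq_refl))).
  pose proof (H x3 (or_intror (or_intror (or_introl eq_refl)))).
  assert (x1 = y1 /\ x2 = y2 /\ x3 = y3) as [-> [-> ->]] by
    (destruct H0 as [|[|[|[]]]]; destruct H5 as [|[|[|[]]]]; destruct H6 as [|[|[|[]]]]; lia).
  reflexivity.
Qed.

Lemma common_in K K' v : In v (common_verts K K') -> In v (tverts K) /\ In v (tverts K').
Proof.
  unfold common_verts. rewrite filter_In. intros [H1 H2]. split; auto.
  apply existsb_exists in H2. destruct H2 as [x [Hx E]]. apply Nat.eqb_eq in E. subst; auto.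
Qed.

Lemma hull_affine pt (l : list nat) (phi1 phi2 c : R) x :
  in_hull pt l x ->
  (forall v, In v l -> phi1 * fst (pt v) + phi2 * snd (pt v) = c) ->
  phi1 * fst x + phi2 * snd x = c.
Proof.
  intros [lam [Hl [Hs ->]]] Hv. simpl.
  rewrite <- !lsum_scal. rewrite <- lsum_plus.
  rewrite <- (Rmult_1_r c). rewrite <- Hs. rewrite <- lsum_scal.
  apply lsum_ext. intros i Hi. apply in_seq in Hi.
  assert (In (nth i l 0%nat) l) by (apply nth_In; lia).
  specialize (Hv _ H). rewrite <- Hv. ring.
Qed.

Definition Qc pt (K : tri) a (g : pt2) := exists al be, 0 < al /\ 0 < be /\
  fst g = al * (fst (pt (oth1 K a)) - fst (pt a)) + be * (fst (pt (oth2 K a)) - fst (pt a)) /\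
  snd g = al * (snd (pt (oth1 K a)) - snd (pt a)) + be * (snd (pt (oth2 K a)) - snd (pt a)).

Lemma Q_unique pt tris K K' a g :
  (forall t, In t tris -> sorted3 t /\ tdet pt t <> 0) ->
  (forall t t' x, In t tris -> In t' tris -> t <> t' ->
     in_tri pt t x -> in_tri pt t' x -> in_hull pt (common_verts t t') x) ->
  In K tris -> In K' tris -> In a (tverts K) -> In a (tverts K') ->
  Qc pt K a g -> Qc pt K' a g -> K = K'.
Proof.
  intros Hwf Hconf HK HK' Ha Ha' [al [be [Hal [Hbe [Hg1 Hg2]]]]] [al' [be' [Hal' [Hbe' [Hg1' Hg2']]]]].
  destruct (classic (K = K')) as [|Hne]; auto. exfalso.
  destruct (Hwf K HK) as [HsK HdK]. destruct (Hwf K' HK') as [HsK' HdK'].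
  set (eps := / (al + be + al' + be' + 1)).
  assert (Heps : 0 < eps) by (unfold eps; apply Rinv_0_lt_compat; lra).
  assert (He1 : eps * (al + be) <= 1).
  { unfold eps. apply Rmult_le_reg_l with (al + be + al' + be' + 1). lra.
    rewrite <- Rmult_assoc, Rinv_r by lra. lra. }
  assert (He2 : eps * (al' + be') <= 1).
  { unfold eps. apply Rmult_le_reg_l with (al + be + al' + be' + 1). lra.
    rewrite <- Rmult_assoc, Rinv_r by lra. lra. }
  set (y := (fst (pt a) + eps * fst g, snd (pt a) + eps * snd g)).
  assert (Hy : in_tri pt K y).
  { pose proof (in_tri_at pt K a (eps * al) (eps * be) HsK Ha ltac:(nra) ltac:(nra) ltac:(lra)) as H.
    unfold y. rewrite Hg1, Hg2. 
    match goal with H : in_tri _ _ ?p |- in_tri _ _ ?q => replace q with p; [exact H|] end.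
    f_equal; ring. }
  assert (Hy' : in_tri pt K' y).
  { pose proof (in_tri_at pt K' a (eps * al') (eps * be') HsK' Ha' ltac:(nra) ltac:(nra) ltac:(lra)) as H.
    unfold y. rewrite Hg1', Hg2'.
    match goal with H : in_tri _ _ ?p |- in_tri _ _ ?q => replace q with p; [exact H|] end.
    f_equal; ring. }
  pose proof (Hconf K K' y HK HK' Hne Hy Hy') as Hh.
  destruct (oth_in K a HsK Ha) as [Hb [Hc Hall]].
  pose proof (oth_det pt K a HsK Ha HdK) as HD. unfold det2, vsub in HD; simpl in HD.
  set (b := oth1 K a) in *. set (c := oth2 K a) in *.
  set (p1 := fst (pt b) - fst (pt a)) in *. set (p2 := snd (pt b) - snd (pt a)) in *.
  set (q1 := fst (pt c) - fst (pt a)) in *. set (q2 := snd (pt c) - snd (pt a)) in *.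
  destruct (classic (In c (common_verts K K'))) as [Hcl|Hcl];
  destruct (classic (In b (common_verts K K'))) as [Hbl|Hbl].
  - apply Hne. apply sorted_incl_eq; auto. intros v Hv.
    destruct (Hall v Hv) as [-> | [-> | ->]]; auto.
    apply (common_in K K' b Hbl). apply (common_in K K' c Hcl).
  -
    assert (E := hull_affine pt _ q2 (- q1) (fst (pt a) * q2 - snd (pt a) * q1) y Hh).
    assert (Hval : q2 * fst y + - q1 * snd y = fst (pt a) * q2 - snd (pt a) * q1).
    { apply E. intros v Hv. destruct (common_in K K' v Hv) as [Hv1 _].
      destruct (Hall v Hv1) as [-> | [-> | ->]].
      - ring. - contradiction. - unfold q1, q2. ring. }
    unfold y in Hval; simpl in Hval. rewrite Hg1, Hg2 in Hval.
    assert (eps * al * (p1 * q2 - p2 * q1) = 0) by (ring_simplify; ring_simplify in Hval; lra).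
    assert (eps * al <> 0) by nra.
    apply HD. apply (Rmult_eq_reg_l (eps * al)); auto. lra.
  - assert (E := hull_affine pt _ (- p2) p1 (p1 * snd (pt a) - p2 * fst (pt a)) y Hh).
    assert (Hval : - p2 * fst y + p1 * snd y = p1 * snd (pt a) - p2 * fst (pt a)).
    { apply E. intros v Hv. destruct (common_in K K' v Hv) as [Hv1 _].
      destruct (Hall v Hv1) as [-> | [-> | ->]].
      - ring. - unfold p1, p2. ring. - contradiction. }
    unfold y in Hval; simpl in Hval. rewrite Hg1, Hg2 in Hval.
    assert (eps * be * (p1 * q2 - p2 * q1) = 0) by (ring_simplify; ring_simplify in Hval; lra).
    assert (eps * be <> 0) by nra.
    apply HD. apply (Rmult_eq_reg_l (eps * be)); auto. lra.
  - assert (E := hull_affine pt _ (- p2) p1 (p1 * snd (pt a) - p2 * fst (pt a)) y Hh).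
    assert (Hval : - p2 * fst y + p1 * snd y = p1 * snd (pt a) - p2 * fst (pt a)).
    { apply E. intros v Hv. destruct (common_in K K' v Hv) as [Hv1 _].
      destruct (Hall v Hv1) as [-> | [-> | ->]].
      - ring. - unfold p1, p2. ring. - contradiction. }
    unfold y in Hval; simpl in Hval. rewrite Hg1, Hg2 in Hval.
    assert (eps * be * (p1 * q2 - p2 * q1) = 0) by (ring_simplify; ring_simplify in Hval; lra).
    assert (eps * be <> 0) by nra.
    apply HD. apply (Rmult_eq_reg_l (eps * be)); auto. lra.
Qed.

Lemma abs_fst_le x y : Rabs (fst x - fst y) <= dist2 x y.
Proof. unfold dist2. rewrite <- sqrt_Rsqr_abs. apply sqrt_le_1_alt. unfold Rsqr.
  pose proof (pow2_ge_0 (snd x - snd y)). nra. Qed.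
Lemma abs_snd_le x y : Rabs (snd x - snd y) <= dist2 x y.
Proof. unfold dist2. rewrite <- sqrt_Rsqr_abs. apply sqrt_le_1_alt. unfold Rsqr.
  pose proof (pow2_ge_0 (fst x - fst y)). nra. Qed.

Lemma oth_det_abs pt K a : sorted3 K -> In a (tverts K) ->
  Rabs (det2 (vsub (pt (oth1 K a)) (pt a)) (vsub (pt (oth2 K a)) (pt a))) = Rabs (tdet pt K).
Proof.
  intros Hs Ha. unfold tdet, det2, vsub; simpl.
  destruct (oth_cases K a Hs Ha) as [[-> [-> ->]]|[[-> [-> ->]]|[-> [-> ->]]]].
  - f_equal; ring.
  - rewrite <- Rabs_Ropp. f_equal; ring.
  - f_equal; ring.
Qed.

Definition gdelta (sigma : R) := / (4 * sigma).
Definition gM (sigma : R) := S (Z.to_nat (up (16 * sigma))).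
Definition grid (sigma : R) : list pt2 :=
  flat_map (fun i => map (fun j => (INR i * gdelta sigma - 2, INR j * gdelta sigma - 2)) (seq 0 (gM sigma)))
    (seq 0 (gM sigma)).

Lemma grid_length sigma : length (grid sigma) = (gM sigma * gM sigma)%nat.
Proof. unfold grid. remember (gM sigma) as M. remember (gdelta sigma) as d.
  assert (forall l : list nat, length (flat_map (fun i => map (fun j => (INR i * d - 2, INR j * d - 2)) (seq 0 M)) l) = (length l * M)%nat).
  { induction l; simpl. lia. rewrite length_app, length_map, length_seq, IHl. lia. }
  rewrite H, length_seq. lia. Qed.

Lemma grid_near sigma u : 0 < sigma -> -2 <= u <= 2 ->
  exists i, (i < gM sigma)%nat /\ Rabs (u - (INR i * gdelta sigma - 2)) <= gdelta sigma.
Proof.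
  intros Hs Hu. set (d := gdelta sigma).
  assert (Hd : 0 < d) by (unfold d, gdelta; apply Rinv_0_lt_compat; lra).
  set (r := (u + 2) / d).
  assert (Hr0 : 0 <= r) by (unfold r; apply Rdiv_le_0_compat; lra).
  assert (Hr1 : r <= 16 * sigma).
  { unfold r, d, gdelta. unfold Rdiv. rewrite Rinv_inv.
    apply Rle_trans with (4*(4*sigma)); [apply Rmult_le_compat_r; lra | lra]. }
  destruct (archimed r) as [A1 A2].
  set (k := (up r - 1)%Z).
  assert (Hk : IZR k = IZR (up r) - 1) by (unfold k; rewrite minus_IZR; reflexivity).
  assert (Hk0 : (0 <= k)%Z). { assert (IZR (-1) < IZR k) by (rewrite Hk; simpl; lra). apply lt_IZR in H. lia. }
  exists (Z.to_nat k). split.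
  - destruct (archimed (16 * sigma)) as [B1 B2].
    assert (IZR k < IZR (up (16 * sigma))) by lra.
    apply lt_IZR in H. unfold gM. lia.
  - rewrite INR_IZR_INZ, Z2Nat.id by auto. rewrite Hk.
    assert (E : u - ((IZR (up r) - 1) * d - 2) = (r - (IZR (up r) - 1)) * d)
      by (unfold r; field; lra).
    rewrite E, Rabs_mult, (Rabs_right d) by lra. rewrite Rabs_right by lra.
    assert (r - (IZR (up r) - 1) <= 1) by lra. nra.
Qed.

Lemma grid_in sigma i j : (i < gM sigma)%nat -> (j < gM sigma)%nat ->
  In (INR i * gdelta sigma - 2, INR j * gdelta sigma - 2) (grid sigma).
Proof.
  intros Hi Hj. unfold grid. apply in_flat_map. exists i. split. apply in_seq; lia.
  apply (in_map (fun j0 => (INR i * gdelta sigma - 2, INR j0 * gdelta sigma - 2))). apply in_seq; lia.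
Qed.

Lemma Rdiv_pos' x y : 0 < x -> 0 < y -> 0 < x / y.
Proof. intros. unfold Rdiv. apply Rmult_lt_0_compat; auto. apply Rinv_0_lt_compat; auto. Qed.

Lemma neg_abs_le x : - Rabs x <= x.
Proof. pose proof (Rle_abs (- x)). rewrite Rabs_Ropp in H. lra. Qed.

Lemma cone_alg (p1 p2 q1 q2 P Qn s g1 g2 : R) : 0 < P -> 0 < Qn -> 0 < s ->
  Rabs p1 <= P -> Rabs p2 <= P -> Rabs q1 <= Qn -> Rabs q2 <= Qn ->
  P * Qn <= s * Rabs (p1 * q2 - p2 * q1) ->
  Rabs (g1 - (p1 / P + q1 / Qn)) <= / (4 * s) ->
  Rabs (g2 - (p2 / P + q2 / Qn)) <= / (4 * s) ->
  exists al be, 0 < al /\ 0 < be /\ g1 = al * p1 + be * q1 /\ g2 = al * p2 + be * q2.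
Proof.
  intros HP HQ Hs Hp1 Hp2 Hq1 Hq2 HD He1 He2.
  set (D := p1 * q2 - p2 * q1) in *.
  set (e1 := g1 - (p1 / P + q1 / Qn)) in *. set (e2 := g2 - (p2 / P + q2 / Qn)) in *.
  assert (HDp : 0 < Rabs D).
  { assert (0 < P * Qn) by (apply Rmult_lt_0_compat; lra). 
    apply Rmult_lt_reg_l with s. lra. lra. }
  assert (HD0 : D <> 0). { intro E. rewrite E, Rabs_R0 in HDp. lra. }
  set (dpg := p1 * g2 - p2 * g1). set (dgq := g1 * q2 - g2 * q1).
  assert (E1 : dpg = D / Qn + (p1 * e2 - p2 * e1)) by (unfold dpg, D, e1, e2; field; lra).
  assert (E2 : dgq = D / P + (e1 * q2 - e2 * q1)) by (unfold dgq, D, e1, e2; field; lra).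
  set (d := / (4 * s)) in *.
  assert (Hd : 0 < d) by (unfold d; apply Rinv_0_lt_compat; lra).
  assert (Hds : 4 * s * d = 1) by (unfold d; field; lra).
  assert (Hprod : forall x y X Y, Rabs x <= X -> Rabs y <= Y -> Rabs (x * y) <= X * Y).
  { intros. rewrite Rabs_mult. apply Rmult_le_compat; auto; apply Rabs_pos. }
  assert (B1 : Rabs (p1 * e2 - p2 * e1) <= 2 * P * d).
  { unfold Rminus. eapply Rle_trans. apply Rabs_triang. rewrite Rabs_Ropp.
    pose proof (Hprod p1 e2 P d Hp1 He2). pose proof (Hprod p2 e1 P d Hp2 He1). lra. }
  assert (B2 : Rabs (e1 * q2 - e2 * q1) <= 2 * Qn * d).
  { unfold Rminus. eapply Rle_trans. apply Rabs_triang. rewrite Rabs_Ropp.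
    pose proof (Hprod e1 q2 d Qn He1 Hq2). pose proof (Hprod e2 q1 d Qn He2 Hq1). lra. }
  assert (X1 : P / s <= Rabs D / Qn).
  { apply Rmult_le_reg_r with (s * Qn). nra. 
    replace (P / s * (s * Qn)) with (P * Qn) by (field; lra).
    replace (Rabs D / Qn * (s * Qn)) with (s * Rabs D) by (field; lra). lra. }
  assert (X2 : Qn / s <= Rabs D / P).
  { apply Rmult_le_reg_r with (s * P). nra. 
    replace (Qn / s * (s * P)) with (P * Qn) by (field; lra).
    replace (Rabs D / P * (s * P)) with (s * Rabs D) by (field; lra). lra. }
  assert (Pos1 : 0 < D * dpg).
  { rewrite E1. 
    replace (D * (D / Qn + (p1 * e2 - p2 * e1))) with (Rabs D * (Rabs D / Qn) + D * (p1 * e2 - p2 * e1)).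
    2:{ replace (Rabs D * (Rabs D / Qn)) with (Rabs D * Rabs D / Qn) by (field; lra).
        rewrite <- Rabs_mult. rewrite Rabs_right by (apply Rle_ge; nra). field; lra. }
    pose proof (Rabs_triang_inv2 0 (D * (p1 * e2 - p2 * e1))) as T.
    assert (Rabs (D * (p1 * e2 - p2 * e1)) <= Rabs D * (2 * P * d)).
    { rewrite Rabs_mult. apply Rmult_le_compat_l. apply Rabs_pos. auto. }
    assert (Hq : Rabs D * (2 * P * d) = Rabs D * (P / s) / 2) by (unfold d; field; lra).
    assert (Rabs D * (Rabs D / Qn) >= Rabs D * (P / s)) by (apply Rle_ge, Rmult_le_compat_l; lra).
    assert (0 < Rabs D * (P / s)) by (apply Rmult_lt_0_compat; [lra| apply Rdiv_pos'; lra]).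
    assert (- Rabs (D * (p1 * e2 - p2 * e1)) <= D * (p1 * e2 - p2 * e1)).
    { apply neg_abs_le. }
    lra. }
  assert (Pos2 : 0 < D * dgq).
  { rewrite E2. 
    replace (D * (D / P + (e1 * q2 - e2 * q1))) with (Rabs D * (Rabs D / P) + D * (e1 * q2 - e2 * q1)).
    2:{ replace (Rabs D * (Rabs D / P)) with (Rabs D * Rabs D / P) by (field; lra).
        rewrite <- Rabs_mult. rewrite Rabs_right by (apply Rle_ge; nra). field; lra. }
    assert (Rabs (D * (e1 * q2 - e2 * q1)) <= Rabs D * (2 * Qn * d)).
    { rewrite Rabs_mult. apply Rmult_le_compat_l. apply Rabs_pos. auto. }
    assert (Hq : Rabs D * (2 * Qn * d) = Rabs D * (Qn / s) / 2) by (unfold d; field; lra).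
    assert (Rabs D * (Rabs D / P) >= Rabs D * (Qn / s)) by (apply Rle_ge, Rmult_le_compat_l; lra).
    assert (0 < Rabs D * (Qn / s)) by (apply Rmult_lt_0_compat; [lra| apply Rdiv_pos'; lra]).
    assert (- Rabs (D * (e1 * q2 - e2 * q1)) <= D * (e1 * q2 - e2 * q1)).
    { apply neg_abs_le. }
    lra. }
  assert (HD2 : 0 < D * D) by (assert (0 < D * D \/ D * D <= 0) as [|] by lra; auto; exfalso; nra).
  exists (dgq / D), (dpg / D). split; [|split; [|split]].
  - replace (dgq / D) with (D * dgq / (D * D)) by (field; auto). apply Rdiv_pos'; auto.
  - replace (dpg / D) with (D * dpg / (D * D)) by (field; auto). apply Rdiv_pos'; auto.
  - unfold dgq, dpg, D. field. auto.
  - unfold dgq, dpg, D. field. auto.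
Qed.

Lemma Q_exists sigma pt K a : sorted3 K -> tdet pt K <> 0 ->
  tdiam pt K <= sigma * tinradius pt K -> In a (tverts K) ->
  exists g, In g (grid sigma) /\ Qc pt K a g.
Proof.
  intros Hs Hd Hsr Ha.
  destruct (diam_sq_bound sigma pt K Hd Hsr) as [Hdiam Hsig].
  pose proof (oth_det_abs pt K a Hs Ha) as HDa.
  pose proof (oth_det pt K a Hs Ha Hd) as HD0.
  destruct (oth_in K a Hs Ha) as [Hb [Hc _]].
  unfold det2, vsub in HDa, HD0; simpl in HDa, HD0.
  set (b := oth1 K a) in *. set (c := oth2 K a) in *.
  set (P := dist2 (pt b) (pt a)). set (Qn := dist2 (pt c) (pt a)).
  assert (HP : 0 < P).
  { apply dist2_pos. intro E. apply HD0. rewrite E. ring. }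
  assert (HQ : 0 < Qn).
  { apply dist2_pos. intro E. apply HD0. rewrite E. ring. }
  assert (HPd : P <= tdiam pt K) by (apply (elen_le_diam pt K b a); auto).
  assert (HQd : Qn <= tdiam pt K) by (apply (elen_le_diam pt K c a); auto).
  assert (HPQ : P * Qn <= sigma * Rabs ((fst (pt b) - fst (pt a)) * (snd (pt c) - snd (pt a)) -
                  (snd (pt b) - snd (pt a)) * (fst (pt c) - fst (pt a)))).
  { rewrite HDa. unfold tarea in Hdiam.
    apply Rle_trans with (tdiam pt K ^ 2). simpl. rewrite Rmult_1_r.
    apply Rmult_le_compat; lra. lra. }
  pose proof (abs_fst_le (pt b) (pt a)). pose proof (abs_snd_le (pt b) (pt a)).
  pose proof (abs_fst_le (pt c) (pt a)). pose proof (abs_snd_le (pt c) (pt a)).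
  fold P Qn in H, H0, H1, H2.
  set (p1 := fst (pt b) - fst (pt a)) in *. set (p2 := snd (pt b) - snd (pt a)) in *.
  set (q1 := fst (pt c) - fst (pt a)) in *. set (q2 := snd (pt c) - snd (pt a)) in *.
  assert (Hu : forall x y, Rabs x <= P -> Rabs y <= Qn -> -2 <= x / P + y / Qn <= 2).
  { intros x y Hx Hy. 
    assert (Rabs (x / P) <= 1).
    { unfold Rdiv. rewrite Rabs_mult, Rabs_inv, (Rabs_right P) by lra.
      apply Rmult_le_reg_r with P. lra. rewrite Rmult_assoc, Rinv_l by lra. lra. }
    assert (Rabs (y / Qn) <= 1).
    { unfold Rdiv. rewrite Rabs_mult, Rabs_inv, (Rabs_right Qn) by lra.
      apply Rmult_le_reg_r with Qn. lra. rewrite Rmult_assoc, Rinv_l by lra. lra. }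
    revert H3 H4. unfold Rabs. repeat destruct (Rcase_abs _); lra. }
  destruct (grid_near sigma (p1 / P + q1 / Qn) Hsig (Hu _ _ H H1)) as [i [Hi Hei]].
  destruct (grid_near sigma (p2 / P + q2 / Qn) Hsig (Hu _ _ H0 H2)) as [j [Hj Hej]].
  exists (INR i * gdelta sigma - 2, INR j * gdelta sigma - 2). split.
  - apply grid_in; auto.
  - rewrite Rabs_minus_sym in Hei, Hej.
    destruct (cone_alg p1 p2 q1 q2 P Qn sigma (INR i * gdelta sigma - 2) (INR j * gdelta sigma - 2)
      HP HQ Hsig H H0 H1 H2 HPQ Hei Hej) as [al [be [H5 [H6 [H7 H8]]]]].
    exists al, be. simpl. auto.
Qed.

Lemma lsum_ind_zero {A} (R : A -> bool) l : (forall x, In x l -> R x = false) ->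
  lsum (fun x => if R x then 1 else 0) l = 0.
Proof. induction l as [|a l IH]; intros H; simpl. reflexivity.
  rewrite (H a (or_introl eq_refl)). rewrite IH; [ring| intros; apply H; right; auto]. Qed.

Lemma lsum_ind_nonneg {A} (R : A -> bool) l : 0 <= lsum (fun x => if R x then 1 else 0) l.
Proof. apply lsum_nonneg. intros. destruct (R x); lra. Qed.

Lemma at_most_one {A} (l : list A) (R : A -> bool) : NoDup l ->
  (forall x y, In x l -> In y l -> R x = true -> R y = true -> x = y) ->
  lsum (fun x => if R x then 1 else 0) l <= 1.
Proof.
  induction l as [|a l IH]; intros Hnd H. simpl; lra.
  rewrite lsum_cons. apply NoDup_cons_iff in Hnd. destruct Hnd as [Hna Hnd].
  destruct (R a) eqn:Ea.
  - rewrite lsum_ind_zero. lra. intros y Hy. destruct (R y) eqn:Ey; auto.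
    exfalso. assert (y = a) by (apply H; simpl; auto). subst. contradiction.
  - assert (lsum (fun x => if R x then 1 else 0) l <= 1) by (apply IH; auto; intros; apply H; simpl; auto).
    lra.
Qed.

Lemma count_inj {A B} (l : list A) (G : list B) (P : A -> bool) (Q : A -> B -> Prop) :
  NoDup l ->
  (forall x, In x l -> P x = true -> exists g, In g G /\ Q x g) ->
  (forall x y g, In x l -> In y l -> P x = true -> P y = true -> Q x g -> Q y g -> x = y) ->
  lsum (fun x => if P x then 1 else 0) l <= INR (length G).
Proof.
  revert P. induction G as [|g G IH]; intros P Hnd Hex Hun.
  - simpl. rewrite lsum_ind_zero. lra. intros x Hx. destruct (P x) eqn:E; auto.
    destruct (Hex x Hx E) as [g [[] _]].
  - rewrite length_cons, S_INR.
    set (P1 := fun x => andb (P x) (cdec (Q x g))). set (P2 := fun x => andb (P x) (negb (cdec (Q x g)))).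
    assert (Hsplit : lsum (fun x => if P x then 1 else 0) l =
       lsum (fun x => if P1 x then 1 else 0) l + lsum (fun x => if P2 x then 1 else 0) l).
    { rewrite <- lsum_plus. apply lsum_ext. intros x _. unfold P1, P2.
      destruct (P x); destruct (cdec (Q x g)); simpl; lra. }
    rewrite Hsplit.
    assert (lsum (fun x => if P1 x then 1 else 0) l <= 1).
    { apply at_most_one; auto. intros x y Hx Hy E1 E2. unfold P1 in E1, E2.
      apply andb_true_iff in E1, E2. destruct E1 as [E1 F1]. destruct E2 as [E2 F2].
      unfold cdec in F1, F2. destruct (excluded_middle_informative (Q x g)); [|discriminate].
      destruct (excluded_middle_informative (Q y g)); [|discriminate].
      eapply Hun; eauto. }
    assert (lsum (fun x => if P2 x then 1 else 0) l <= INR (length G)).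
    { apply IH; auto.
      - intros x Hx E. unfold P2 in E. apply andb_true_iff in E. destruct E as [E F].
        destruct (Hex x Hx E) as [g' [Hg' HQ]]. destruct Hg' as [<-|Hg'].
        + unfold cdec in F. destruct (excluded_middle_informative (Q x g)); [discriminate|contradiction].
        + eauto.
      - intros x y g' Hx Hy E1 E2. unfold P2 in E1, E2.
        apply andb_true_iff in E1, E2. destruct E1 as [E1 _]. destruct E2 as [E2 _]. eauto. }
    lra.
Qed.

Definition ind (P : Prop) : R := if cdec P then 1 else 0.

Lemma ind_true (P : Prop) : P -> ind P = 1.
Proof. intros H. unfold ind, cdec. destruct (excluded_middle_informative P); tauto. Qed.
Lemma ind_false (P : Prop) : ~ P -> ind P = 0.
Proof. intros H. unfold ind, cdec. destruct (excluded_middle_informative P); tauto. Qed.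
Lemma ind_bounds (P : Prop) : 0 <= ind P <= 1.
Proof. unfold ind. destruct (cdec P); lra. Qed.

Section Val.
Variables (sigma : R) (N : nat) (pt : nat -> pt2) (tris : list tri) (Om : pt2 -> Prop).
Hypothesis Hwf : forall t, In t tris -> sorted3 t /\ tdet pt t <> 0 /\ (tv3 t < N)%nat.
Hypothesis Hnd : NoDup tris.
Hypothesis Hconf : forall t t' x, In t tris -> In t' tris -> t <> t' ->
     in_tri pt t x -> in_tri pt t' x -> in_hull pt (common_verts t t') x.
Hypothesis Hsr : shape_regular sigma pt tris.

Definition Mg := INR (gM sigma * gM sigma).

Lemma count_tris a : lsum (fun K => ind (In a (tverts K))) tris <= Mg.
Proof.
  unfold Mg. rewrite <- grid_length.
  apply (count_inj tris (grid sigma) (fun K => cdec (In a (tverts K))) (fun K g => Qc pt K a g)); auto.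
  - intros K HK E. unfold cdec in E. destruct (excluded_middle_informative _); [|discriminate].
    destruct (Hwf K HK) as [Hs [Hd _]]. apply Q_exists; auto.
  - intros x y g Hx Hy Ex Ey Qx Qy. unfold cdec in Ex, Ey.
    destruct (excluded_middle_informative (In a (tverts x))); [|discriminate].
    destruct (excluded_middle_informative (In a (tverts y))); [|discriminate].
    apply (Q_unique pt tris x y a g); auto. intros t Ht. destruct (Hwf t Ht) as [? [? _]]; auto.
Qed.

Lemma count_verts K : lsum (fun j => ind (In j (tverts K))) (seq 0 N) <= 3.
Proof.
  replace 3 with (INR (length (tverts K))) by (simpl; lra).
  apply (count_inj (seq 0 N) (tverts K) (fun j => cdec (In j (tverts K))) (fun j g => j = g)).
  - apply seq_NoDup.
  - intros x _ E. unfold cdec in E. destruct (excluded_middle_informative _); [|discriminate]. eauto.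
  - intros x y g _ _ _ _ -> ->. auto.
Qed.

Lemma Mg_nonneg : 0 <= Mg.
Proof. apply pos_INR. Qed.

Lemma S_edge a j : in_S pt tris Om a j -> exists K, In K tris /\ In a (tverts K) /\ In j (tverts K).
Proof.
  intros [_ [[_ [[_ [K HK]] _]] | [_ [[_ [K HK]] _]]]]; exists K; tauto.
Qed.

Lemma count_S a : lsum (fun j => ind (in_S pt tris Om a j)) (seq 0 N) <= 3 * Mg.
Proof.
  apply Rle_trans with (lsum (fun j => lsum (fun K => ind (In a (tverts K)) * ind (In j (tverts K))) tris) (seq 0 N)).
  - apply lsum_le. intros j _. destruct (classic (in_S pt tris Om a j)) as [H|H].
    + rewrite ind_true by auto. destruct (S_edge a j H) as [K [HK [Ha Hj]]].
      replace 1 with (ind (In a (tverts K)) * ind (In j (tverts K))) by (rewrite !ind_true; auto; ring).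
      apply (lsum_single (fun K => ind (In a (tverts K)) * ind (In j (tverts K)))); auto.
      intros. pose proof (ind_bounds (In a (tverts y))). pose proof (ind_bounds (In j (tverts y))). nra.
    + rewrite ind_false by auto. apply lsum_nonneg. intros.
      pose proof (ind_bounds (In a (tverts x))). pose proof (ind_bounds (In j (tverts x))). nra.
  - rewrite lsum_swap.
    apply Rle_trans with (lsum (fun K => ind (In a (tverts K)) * 3) tris).
    + apply lsum_le. intros K _. rewrite lsum_scal. apply Rmult_le_compat_l.
      apply ind_bounds. apply count_verts.
    + rewrite (lsum_ext _ (fun K => 3 * ind (In a (tverts K)))) by (intros; ring).
      rewrite lsum_scal. pose proof (count_tris a). lra.
Qed.
End Val.

Lemma tverts_lt N K v : sorted3 K -> (tv3 K < N)%nat -> In v (tverts K) -> (v < N)%nat.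
Proof. unfold sorted3, tverts. simpl. intros [? ?] ? [<-|[<-|[<-|[]]]]; lia. Qed.

Section Main.
Variables (sigma p gamma0 : R) (N : nat) (pt : nat -> pt2) (tris : list tri) (Om : pt2 -> Prop).
Hypothesis Hp : 1 <= p.
Hypothesis Hg : 0 < gamma0.
Hypothesis Hwf : forall t, In t tris -> sorted3 t /\ tdet pt t <> 0 /\ (tv3 t < N)%nat.
Hypothesis Hinj : forall i j, (i < N)%nat -> (j < N)%nat -> pt i = pt j -> i = j.
Hypothesis Hsr : shape_regular sigma pt tris.
Hypothesis Hsig : 0 < sigma.

Lemma IE_facts a b : interior_edge pt tris Om a b ->
  In a (seq 0 N) /\ In b (seq 0 N) /\ in_S pt tris Om a b /\ in_S pt tris Om b a /\
  0 < elen pt a b /\ elen pt a b <= hmax pt tris /\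
  exists K, In K tris /\ In a (tverts K) /\ In b (tverts K).
Proof.
  intros HIE. pose proof HIE as [Hab [[Hne [K [HK [Ha Hb]]]] _]].
  destruct (Hwf K HK) as [Hs [Hd HN]].
  pose proof (tverts_lt N K a Hs HN Ha). pose proof (tverts_lt N K b Hs HN Hb).
  split; [apply in_seq; lia|]. split; [apply in_seq; lia|].
  split. { split. lia. auto. } split. { split. lia. auto. }
  split. { unfold elen. apply dist2_pos. intro E. apply Hinj in E; auto. }
  split. { eapply Rle_trans. apply (elen_le_diam pt K a b Ha Hb). apply hmax_ge; auto. }
  eauto.
Qed.

Definition Tu (u z : nat -> R) a b :=
  gamma0 * elen pt a b ^ 2 * alphaE N pt tris Om p u a b * edge_int pt u z a b.

Lemma Tu_eq u z a b : 0 < elen pt a b ->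
  Tu u z a b = gamma0 * elen pt a b * (alphaE N pt tris Om p u a b * (u b - u a)) * (z b - z a).
Proof. intros H. unfold Tu, edge_int. field. lra. Qed.

Lemma cdec_true (P : Prop) : P -> cdec P = true.
Proof. intros. unfold cdec. destruct (excluded_middle_informative P); tauto. Qed.

Lemma EE_single v w a b : In b (seq 0 N) -> in_S pt tris Om a b ->
  Rabs ((v b - v a) - (w b - w a)) <= EE N pt tris Om v w a.
Proof.
  intros Hb HS. unfold EE, Esum.
  pose (f := fun j => if cdec (in_S pt tris Om a j) then Rabs (v a - v j - (w a - w j)) else 0).
  change (Rabs ((v b - v a) - (w b - w a)) <= lsum f (seq 0 N)).
  replace (Rabs ((v b - v a) - (w b - w a))) with (f b).
  - apply lsum_single; auto. intros. unfold f. destruct (cdec _). apply Rabs_pos. lra.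
  - unfold f. rewrite cdec_true by auto. rewrite <- Rabs_Ropp. f_equal. ring.
Qed.

Lemma EE_nonneg v w a : 0 <= EE N pt tris Om v w a.
Proof. unfold EE, Esum. apply lsum_nonneg. intros. destruct (cdec _). apply Rabs_pos. lra. Qed.

Lemma term_bound v w z a b : interior_edge pt tris Om a b ->
  Rabs (Tu v z a b - Tu w z a b) <=
  gamma0 * hmax pt tris * (2 * p + 1) * ((EE N pt tris Om v w a + EE N pt tris Om v w b) * Rabs (z b - z a)).
Proof.
  intros HIE. destruct (IE_facts a b HIE) as [Ha [Hb [Sab [Sba [HL [HLh _]]]]]].
  rewrite !Tu_eq by auto.
  pose proof (G_lip N pt tris Om p v w a b Hp Ha Hb (cdec_true _ Sab) (cdec_true _ Sba)) as HG.
  pose proof (EE_single v w a b Hb Sab) as HS.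
  pose proof (EE_nonneg v w a). pose proof (EE_nonneg v w b).
  set (Gv := alphaE N pt tris Om p v a b * (v b - v a)) in *.
  set (Gw := alphaE N pt tris Om p w a b * (w b - w a)) in *.
  replace (gamma0 * elen pt a b * Gv * (z b - z a) - gamma0 * elen pt a b * Gw * (z b - z a))
    with ((gamma0 * elen pt a b) * ((Gv - Gw) * (z b - z a))) by ring.
  rewrite Rabs_mult. rewrite (Rabs_right (gamma0 * elen pt a b)) by (apply Rle_ge; nra). rewrite Rabs_mult.
  assert (HGb : Rabs (Gv - Gw) <= (2 * p + 1) * (EE N pt tris Om v w a + EE N pt tris Om v w b)) by nra.
  pose proof (Rabs_pos (Gv - Gw)). pose proof (Rabs_pos (z b - z a)).
  replace (gamma0 * hmax pt tris * (2 * p + 1) * ((EE N pt tris Om v w a + EE N pt tris Om v w b) * Rabs (z b - z a)))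
    with ((gamma0 * hmax pt tris) * (((2 * p + 1) * (EE N pt tris Om v w a + EE N pt tris Om v w b)) * Rabs (z b - z a))) by ring.
  apply Rmult_le_compat.
  - nra.
  - nra.
  - apply Rmult_le_compat_l; lra.
  - apply Rmult_le_compat_r; lra.
Qed.

Hypothesis Hnd : NoDup tris.
Hypothesis Hconf : forall t t' x, In t tris -> In t' tris -> t <> t' ->
     in_tri pt t x -> in_tri pt t' x -> in_hull pt (common_verts t t') x.

Lemma abs_sq x : Rabs x ^ 2 = x ^ 2.
Proof. unfold Rabs. destruct (Rcase_abs x); ring. Qed.

Lemma ind_sq (P : Prop) : ind P * ind P = ind P.
Proof. unfold ind. destruct (cdec P); ring. Qed.

Definition Hs (y : nat -> R) := lsum (fun K => TK pt y K) tris.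

Lemma star_sq_bound (y : nat -> R) :
  nsum N (fun a => (nsum N (fun b => ind (in_S pt tris Om a b) * Rabs (y a - y b))) ^ 2)
  <= 3 * Mg sigma * (18 * sigma) * Hs y.
Proof.
  unfold nsum.
  apply Rle_trans with (lsum (fun a => 3 * Mg sigma * lsum (fun b => ind (in_S pt tris Om a b) * (y b - y a) ^ 2) (seq 0 N)) (seq 0 N)).
  { apply lsum_le. intros a _.
    rewrite (lsum_ext (fun b => ind (in_S pt tris Om a b) * Rabs (y a - y b))
       (fun b => ind (in_S pt tris Om a b) * (ind (in_S pt tris Om a b) * Rabs (y a - y b)))).
    2:{ intros. rewrite <- Rmult_assoc, ind_sq. reflexivity. }
    eapply Rle_trans. apply lsum_CS.
    rewrite (lsum_ext (fun x => ind (in_S pt tris Om a x) ^ 2) (fun x => ind (in_S pt tris Om a x))).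
    2:{ intros. simpl. rewrite Rmult_1_r. apply ind_sq. }
    rewrite (lsum_ext (fun x => (ind (in_S pt tris Om a x) * Rabs (y a - y x)) ^ 2)
       (fun b => ind (in_S pt tris Om a b) * (y b - y a) ^ 2)).
    2:{ intros. rewrite Rpow_mult_distr. rewrite abs_sq. simpl. rewrite !Rmult_1_r. rewrite ind_sq.
        f_equal. ring. }
    apply Rmult_le_compat_r.
    - apply lsum_nonneg. intros. pose proof (ind_bounds (in_S pt tris Om a x)). pose proof (pow2_ge_0 (y x - y a)). nra.
    - apply (count_S sigma N pt tris Om); auto. }
  rewrite lsum_scal.
  replace (3 * Mg sigma * (18 * sigma) * Hs y) with (3 * Mg sigma * (18 * sigma * Hs y)) by ring.
  apply Rmult_le_compat_l. pose proof (Mg_nonneg sigma). lra.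
  apply Rle_trans with (lsum (fun a => lsum (fun b => lsum (fun K =>
     ind (In a (tverts K)) * ind (In b (tverts K)) * (2 * sigma * TK pt y K)) tris) (seq 0 N)) (seq 0 N)).
  { apply lsum_le. intros a _. apply lsum_le. intros b _.
    destruct (classic (in_S pt tris Om a b)) as [H|H].
    + rewrite ind_true by auto. rewrite Rmult_1_l. destruct (S_edge pt tris Om a b H) as [K [HK [Ha Hb]]].
      destruct (Hwf K HK) as [_ [Hd _]].
      apply Rle_trans with (2 * sigma * TK pt y K).
      * apply edge_diff_bound; auto.
      * replace (2 * sigma * TK pt y K) with (ind (In a (tverts K)) * ind (In b (tverts K)) * (2 * sigma * TK pt y K)) at 1
          by (rewrite !ind_true; auto; ring).
        apply (lsum_single (fun K => ind (In a (tverts K)) * ind (In b (tverts K)) * (2 * sigma * TK pt y K))); auto.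
        intros. pose proof (ind_bounds (In a (tverts y0))). pose proof (ind_bounds (In b (tverts y0))).
        pose proof (TK_nonneg pt y y0). apply Rmult_le_pos. nra. nra.
    + rewrite ind_false by auto. rewrite Rmult_0_l. apply lsum_nonneg. intros.
        pose proof (ind_bounds (In a (tverts x))). pose proof (ind_bounds (In b (tverts x))).
        pose proof (TK_nonneg pt y x). apply Rmult_le_pos. nra. nra. }
  rewrite (lsum_ext _ (fun a => lsum (fun K => lsum (fun b => ind (In a (tverts K)) * ind (In b (tverts K)) * (2 * sigma * TK pt y K)) (seq 0 N)) tris))
    by (intros; apply lsum_swap).
  rewrite lsum_swap.
  unfold Hs. rewrite <- lsum_scal.
  apply lsum_le. intros K HK.
  rewrite (lsum_ext _ (fun a => (2 * sigma * TK pt y K * ind (In a (tverts K))) * lsum (fun b => ind (In b (tverts K))) (seq 0 N))).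
  2:{ intros a _. rewrite <- lsum_scal. apply lsum_ext. intros. ring. }
  rewrite (lsum_ext _ (fun a => (2 * sigma * TK pt y K * lsum (fun b => ind (In b (tverts K))) (seq 0 N)) * ind (In a (tverts K)))) by (intros; ring).
  rewrite lsum_scal.
  pose proof (count_verts N K). pose proof (TK_nonneg pt y K).
  assert (0 <= lsum (fun b => ind (In b (tverts K))) (seq 0 N)) by (apply lsum_nonneg; intros; apply ind_bounds).
  assert (0 <= 2 * sigma * TK pt y K) by nra.
  set (c := lsum (fun b => ind (In b (tverts K))) (seq 0 N)) in *.
  replace (2 * sigma * TK pt y K * c * c) with ((2 * sigma * TK pt y K) * (c * c)) by ring.
  replace (18 * sigma * TK pt y K) with ((2 * sigma * TK pt y K) * 9) by ring.
  apply Rmult_le_compat_l; auto. nra.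
Qed.

Lemma ind_IE_le a b : ind (interior_edge pt tris Om a b) + ind (interior_edge pt tris Om b a)
  <= ind (in_S pt tris Om a b).
Proof.
  destruct (classic (interior_edge pt tris Om a b)) as [H1|H1];
  destruct (classic (interior_edge pt tris Om b a)) as [H2|H2].
  - exfalso. destruct H1 as [? _]. destruct H2 as [? _]. lia.
  - rewrite (ind_true (interior_edge _ _ _ a b)), (ind_false (interior_edge _ _ _ b a)), ind_true; auto.
    lra. split. destruct H1; lia. auto.
  - rewrite (ind_false (interior_edge _ _ _ a b)), (ind_true (interior_edge _ _ _ b a)), ind_true; auto.
    lra. split. destruct H2; lia. auto.
  - rewrite !ind_false by auto. pose proof (ind_bounds (in_S pt tris Om a b)). lra.
Qed.

Lemma EE_eq v w a : EE N pt tris Om v w a =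
  nsum N (fun b => ind (in_S pt tris Om a b) * Rabs ((v a - w a) - (v b - w b))).
Proof. unfold EE, Esum, nsum. apply lsum_ext. intros b _. unfold ind.
  destruct (cdec _). rewrite Rmult_1_l. f_equal. ring. ring. Qed.

Lemma step3 v w z :
  nsum N (fun a => nsum N (fun b => ind (interior_edge pt tris Om a b) *
     ((EE N pt tris Om v w a + EE N pt tris Om v w b) * Rabs (z b - z a))))
  <= nsum N (fun a => EE N pt tris Om v w a *
        nsum N (fun b => ind (in_S pt tris Om a b) * Rabs (z a - z b))).
Proof.
  unfold nsum.
  set (E := EE N pt tris Om v w).
  rewrite (lsum_ext _ (fun a => lsum (fun b => ind (interior_edge pt tris Om a b) * E a * Rabs (z b - z a)) (seq 0 N)
     + lsum (fun b => ind (interior_edge pt tris Om a b) * E b * Rabs (z b - z a)) (seq 0 N))).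
  2:{ intros a _. rewrite <- lsum_plus. apply lsum_ext. intros. ring. }
  rewrite lsum_plus.
  rewrite (lsum_swap (fun a b => ind (interior_edge pt tris Om a b) * E b * Rabs (z b - z a))).
  rewrite <- lsum_plus.
  apply lsum_le. intros a _. rewrite <- lsum_plus. rewrite <- lsum_scal.
  apply lsum_le. intros b _.
  pose proof (ind_IE_le a b). rewrite (Rabs_minus_sym (z a) (z b)).
  pose proof (Rabs_pos (z b - z a)). assert (0 <= E a) by apply EE_nonneg.
  assert (0 <= E a * Rabs (z b - z a)) by nra.
  replace (ind (interior_edge pt tris Om a b) * E a * Rabs (z b - z a) +
     ind (interior_edge pt tris Om b a) * E a * Rabs (z b - z a)) with
     ((ind (interior_edge pt tris Om a b) + ind (interior_edge pt tris Om b a)) * (E a * Rabs (z b - z a))) by ring.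
  replace (E a * (ind (in_S pt tris Om a b) * Rabs (z b - z a))) with
    (ind (in_S pt tris Om a b) * (E a * Rabs (z b - z a))) by ring.
  apply Rmult_le_compat_r; auto.
Qed.

Lemma main_bound v w z :
  Rabs (d_h N pt tris Om p gamma0 v v z - d_h N pt tris Om p gamma0 w w z)
  <= ((2 * p + 1) * (54 * Mg sigma * sigma)) * gamma0 * hmax pt tris
     * sqrt (Hs (fun i => v i - w i)) * sqrt (Hs z).
Proof.
  set (K0 := gamma0 * hmax pt tris * (2 * p + 1)).
  assert (HK0 : 0 <= K0) by (unfold K0; pose proof (hmax_nonneg pt tris); apply Rmult_le_pos; [nra|lra]).
  set (E := EE N pt tris Om v w).
  set (Z := fun a => nsum N (fun b => ind (in_S pt tris Om a b) * Rabs (z a - z b))).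
  assert (H1 : Rabs (d_h N pt tris Om p gamma0 v v z - d_h N pt tris Om p gamma0 w w z)
     <= K0 * lsum (fun a => E a * Z a) (seq 0 N)).
  { unfold d_h, nsum. rewrite <- lsum_minus.
    eapply Rle_trans. apply lsum_abs.
    eapply Rle_trans with (lsum (fun a => lsum (fun b => K0 * (ind (interior_edge pt tris Om a b) *
       ((E a + E b) * Rabs (z b - z a)))) (seq 0 N)) (seq 0 N)).
    - apply lsum_le. intros a _. rewrite <- lsum_minus. eapply Rle_trans. apply lsum_abs.
      apply lsum_le. intros b _.
      destruct (classic (interior_edge pt tris Om a b)) as [HI|HI].
      + rewrite cdec_true by auto. rewrite ind_true by auto. rewrite Rmult_1_l.
        pose proof (term_bound v w z a b HI). unfold Tu in H. unfold K0. fold E in H.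
        exact H.
      + unfold cdec. destruct (excluded_middle_informative _); [contradiction|].
        rewrite ind_false by auto. rewrite Rminus_0_r, Rabs_R0. lra.
    - rewrite (lsum_ext _ (fun a => K0 * lsum (fun b => ind (interior_edge pt tris Om a b) *
       ((E a + E b) * Rabs (z b - z a))) (seq 0 N))) by (intros; apply lsum_scal).
      rewrite lsum_scal. apply Rmult_le_compat_l; auto. apply step3. }
  eapply Rle_trans. apply H1.
  pose proof (lsum_sqrt_CS E Z (seq 0 N)) as HCS.
  pose proof (star_sq_bound (fun i => v i - w i)) as B1.
  pose proof (star_sq_bound z) as B2.
  assert (HE : lsum (fun x => E x ^ 2) (seq 0 N) <= 3 * Mg sigma * (18 * sigma) * Hs (fun i => v i - w i)).
  { eapply Rle_trans; [|apply B1]. unfold nsum. apply Req_le. apply lsum_ext. intros a _.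
    unfold E. rewrite EE_eq. reflexivity. }
  assert (HZ : lsum (fun x => Z x ^ 2) (seq 0 N) <= 3 * Mg sigma * (18 * sigma) * Hs z) by exact B2.
  pose proof (Mg_nonneg sigma).
  set (c := 3 * Mg sigma * (18 * sigma)) in *.
  assert (Hc : 0 <= c) by (unfold c; nra).
  assert (He0 : 0 <= Hs (fun i => v i - w i)) by (apply lsum_nonneg; intros; apply TK_nonneg).
  assert (Hz0 : 0 <= Hs z) by (apply lsum_nonneg; intros; apply TK_nonneg).
  assert (S1 : sqrt (lsum (fun x => E x ^ 2) (seq 0 N)) <= sqrt c * sqrt (Hs (fun i => v i - w i))).
  { rewrite <- sqrt_mult by auto. apply sqrt_le_1_alt. auto. }
  assert (S2 : sqrt (lsum (fun x => Z x ^ 2) (seq 0 N)) <= sqrt c * sqrt (Hs z)).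
  { rewrite <- sqrt_mult by auto. apply sqrt_le_1_alt. auto. }
  assert (HCS2 : lsum (fun a => E a * Z a) (seq 0 N) <= c * sqrt (Hs (fun i => v i - w i)) * sqrt (Hs z)).
  { eapply Rle_trans. apply HCS.
    pose proof (sqrt_pos (lsum (fun x => E x ^ 2) (seq 0 N))).
    pose proof (sqrt_pos (lsum (fun x => Z x ^ 2) (seq 0 N))).
    eapply Rle_trans. apply Rmult_le_compat; eauto.
    replace c with (sqrt c * sqrt c) at 3 by (apply sqrt_sqrt; auto). lra. }
  apply Rle_trans with (K0 * (c * sqrt (Hs (fun i => v i - w i)) * sqrt (Hs z))).
  { apply Rmult_le_compat_l; auto. }
  unfold K0, c. apply Req_le. ring.
Qed.

End Main.

Lemma tinradius_nonneg pt K : 0 <= tinradius pt K.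
Proof.
  unfold tinradius. set (P := elen pt (tv1 K) (tv2 K) + elen pt (tv2 K) (tv3 K) + elen pt (tv1 K) (tv3 K)).
  assert (0 <= tarea pt K) by (unfold tarea; pose proof (Rabs_pos (tdet pt K)); lra).
  assert (0 <= P) by (unfold P, elen; pose proof (dist2_nonneg (pt (tv1 K)) (pt (tv2 K)));
     pose proof (dist2_nonneg (pt (tv2 K)) (pt (tv3 K))); pose proof (dist2_nonneg (pt (tv1 K)) (pt (tv3 K))); lra).
  destruct (Req_dec P 0) as [E|E].
  - rewrite E. unfold Rdiv. rewrite Rinv_0. lra.
  - apply Rdiv_le_0_compat; lra.
Qed.

Theorem lemma2p2 :
  forall sigma p : R, 1 <= p ->
  exists Clip : R, 0 < Clip /\
    forall (N : nat) (pt : nat -> pt2) (tris : list tri) (Om : pt2 -> Prop),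
      conforming_triangulation N pt tris Om ->
      shape_regular sigma pt tris ->
      forall (gamma0 : R), 0 < gamma0 ->
      forall v w z : nat -> R,
        Rabs (d_h N pt tris Om p gamma0 v v z - d_h N pt tris Om p gamma0 w w z)
        <= Clip * gamma0 * hmax pt tris
           * h1semi pt tris (fun i => v i - w i) * h1semi pt tris z.
Proof.
  intros sigma p Hp.
  set (s := Rmax sigma 1).
  assert (Hs1 : 1 <= s) by apply Rmax_r.
  exists ((2 * p + 1) * (54 * Mg s * s)). split.
  { assert (1 <= Mg s). { unfold Mg, gM. rewrite <- INR_1. apply le_INR. simpl. lia. }
    apply Rmult_lt_0_compat. lra. nra. }
  intros N pt tris Om HC Hsr gamma0 Hg v w z.
  destruct HC as [_ [_ [_ [_ [Htri [Hnd [Hinj [_ [_ Hconf]]]]]]]]].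
  assert (Hsr' : shape_regular s pt tris).
  { intros K HK. eapply Rle_trans. apply Hsr; auto. apply Rmult_le_compat_r.
    apply tinradius_nonneg. apply Rmax_l. }
  assert (Hwf : forall t, In t tris -> sorted3 t /\ tdet pt t <> 0 /\ (tv3 t < N)%nat).
  { intros t Ht. destruct (Htri t Ht) as [? [? [? ?]]]. unfold sorted3. auto. }
  apply (main_bound s p gamma0 N pt tris Om Hp Hg Hwf Hinj Hsr' ltac:(lra) Hnd Hconf v w z).
Qed.
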